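(* Let $(\mathcal C,S,T)$ be a finite basic association schemoid whose underlying category is a connected groupoid with $T(f)=f^{-1}$, let $H:\mathcal C\to\mathbb K\text{-Mod}$ be a functor such that $D=\pi^*p^*H$ has all $D_g$ finite abelian groups, let $D_+\to\mathcal E\xrightarrow{q}\mathcal C$ be a linear extension and $(\mathcal E,\widetilde S)$ with $\widetilde S=\{q^{-1}(\sigma)\}_{\sigma\in S}$ the associated schemoid extension, and let $\mathbb K$ be a field. Then the algebra map $\mathbb K(q):\mathbb K(\mathcal E,\widetilde S)\to\mathbb K(\mathcal C,S)$, $s_{\tilde\pi}\mapsto n^q_{\tilde\pi}s_{q(\tilde\pi)}=\#D_g\, s_{q(\tilde\pi)}$, is an isomorphism if and only if the characteristic of $\mathbb K$ does not divide $\#D_g$ for any morphism $g$ of $\mathcal C$; if the characteristic divides $\#D_g$ for some $g$, then $\mathbb K(q)$ is the zero map.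
   Context: Write $s(f),t(f)$ for source and target. A quasi-schemoid is a pair $(\mathcal C,S)$ with $\mathcal C$ a small category and $S$ a partition of $mor(\mathcal C)$ into nonempty blocks such that for all $\sigma,\tau,\mu\in S$ and $f,g\in\mu$ the sets $\{(a,b)\in\sigma\times\tau: s(a)=t(b), a\circ b=f\}$ and the analogous set for $g$ have equal cardinality. An association schemoid is a triple $(\mathcal C,S,T)$ with $(\mathcal C,S)$ a quasi-schemoid, every block containing an endomorphism consisting only of endomorphisms, and $T$ a contravariant endofunctor with $T^2=\mathrm{id}$ and $\{T(f):f\in\sigma\}\in S$. It is finite if $mor(\mathcal C)$ is finite, unital if every block meeting $\{1_x\}$ lies in $\{1_x\}$, basic if unital with $\mathcal C$ a groupoid. The category $F(\mathcal C)$ has objects the morphisms of $\mathcal C$ and morphisms $f\to g$ the pairs $(\alpha,\beta)$ with $g=\alpha f\beta$; a natural system is a functor $D:F(\mathcal C)\to\mathbb K\text{-Mod}$, $f_*=D(f,1)$, $g^*=D(1,g)$; $D=\pi^*p^*H$ means $D_f=H(t(f))$, $D(\alpha,\beta)=H(\alpha)$. A linear extension $D_+\to\mathcal E\xrightarrow{q}\mathcal C$ consists of a category $\mathcal E$ with the same objects and a full functor $q$ that is the identity on objects, such that each $D_f$ acts transitively and freely on $q^{-1}(f)$ and $(f_0+\alpha)(g_0+\beta)=f_0g_0+f_*\beta+g^*\alpha$. The category algebra $\mathbb K\mathcal C$ is the free $\mathbb K$-module on $mor(\mathcal C)$ with product $a\cdot b=a\circ b$ if composable and $0$ otherwise; $s_\sigma=\sum_{f\in\sigma}f$;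 the schemoid algebra $\mathbb K(\mathcal C,S)$ is the span of the $s_\sigma$. $q(\tilde\pi)$ denotes the block of $S$ containing $q(\tilde\pi)$, and $n^q_{\tilde\pi}$ is the number of $f\in\tilde\pi$ with $t(f)=x$ and $q(f)=g$ (for any $x$ and $g\in q(\tilde\pi)$ with $t(g)=x$), which equals $\#D_g$ (constant since $\mathcal C$ is connected). *)

(* Defs.v *)
From HB Require Import structures.
From mathcomp Require Import all_boot all_order all_algebra.
Set Implicit Arguments. Unset Strict Implicit. Unset Printing Implicit Defensive.
Import GRing.Theory.
Local Open Scope ring_scope.

Definition is_category (O M : finType) (src tgt : M -> O) (id : O -> M)
    (comp : M -> M -> M) : Prop :=
  [/\ forall x, src (id x) = x /\ tgt (id x) = x,
      forall f g, src f = tgt g -> src (comp f g) = src g /\ tgt (comp f g) = tgt f,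
      forall f, comp f (id (src f)) = f /\ comp (id (tgt f)) f = f &
      forall f g h, src f = tgt g -> src g = tgt h ->
        comp f (comp g h) = comp (comp f g) h].

Definition is_groupoid_inv (O M : finType) (src tgt : M -> O) (id : O -> M)
    (comp : M -> M -> M) (inv : M -> M) : Prop :=
  forall f, [/\ src (inv f) = tgt f, tgt (inv f) = src f,
                comp f (inv f) = id (tgt f) & comp (inv f) f = id (src f)].

Definition cat_connected (O M : finType) (src tgt : M -> O) : Prop :=
  forall x y : O,
    connect (fun a b : O => [exists f : M, ((src f == a) && (tgt f == b))
                                       || ((src f == b) && (tgt f == a))]) x y.

Definition nfact (O M : finType) (src tgt : M -> O) (comp : M -> M -> M)
    (sig tau : {set M}) (f : M) : nat :=
  #|[set ab : M * M | [&& ab.1 \in sig, ab.2 \in tau, src ab.1 == tgt ab.2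
                          & comp ab.1 ab.2 == f]]|.

Definition is_quasi_schemoid (O M : finType) (src tgt : M -> O)
    (comp : M -> M -> M) (S : {set {set M}}) : Prop :=
  partition S [set: M] /\
  forall sig tau mu, sig \in S -> tau \in S -> mu \in S ->
    forall f g, f \in mu -> g \in mu ->
      nfact src tgt comp sig tau f = nfact src tgt comp sig tau g.

Definition is_association_schemoid (O M : finType) (src tgt : M -> O)
    (id : O -> M) (comp : M -> M -> M) (S : {set {set M}})
    (Tob : O -> O) (Tmor : M -> M) : Prop :=
  [/\ is_quasi_schemoid src tgt comp S,
      forall sig, sig \in S -> (exists2 f, f \in sig & src f = tgt f) ->
        forall f, f \in sig -> src f = tgt f,
      [/\ (forall f, src (Tmor f) = Tob (tgt f) /\ tgt (Tmor f) = Tob (src f)),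
          (forall x, Tmor (id x) = id (Tob x)) &
          (forall f g, src f = tgt g -> Tmor (comp f g) = comp (Tmor g) (Tmor f))],
      ((forall x, Tob (Tob x) = x) /\ (forall f, Tmor (Tmor f) = f)) &
      forall sig, sig \in S -> Tmor @: sig \in S].

Definition is_unital (O M : finType) (id : O -> M) (S : {set {set M}}) : Prop :=
  forall sig, sig \in S -> forall x, id x \in sig -> sig \subset [set id x].

(* Category algebra K C realized as {ffun M -> K} (coefficients on morphisms);
   s_sigma and the schemoid algebra (span of the s_sigma). *)
Definition sblock (K : fieldType) (M : finType) (sig : {set M}) : {ffun M -> K} :=
  [ffun f => (f \in sig)%:R].

Definition in_schemoid_alg (K : fieldType) (M : finType) (S : {set {set M}})
    (v : {ffun M -> K}) : Prop :=
  exists c : {set M} -> K,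
    v = \sum_(sig in S) [ffun f => c sig * sblock K sig f].

Definition Kmap (K : fieldType) (ME M : finType) (q : ME -> M)
    (v : {ffun ME -> K}) : {ffun M -> K} :=
  [ffun g => \sum_(e : ME | q e == g) v e].

Definition Stilde (ME M : finType) (q : ME -> M) (S : {set {set M}})
    : {set {set ME}} := [set q @^-1: sig | sig : {set M} in S].

(* Main.v *)
Require Import Defs.
From HB Require Import structures.
From mathcomp Require Import all_boot all_order all_algebra.
Import GRing.Theory.
Local Open Scope ring_scope.

Lemma imset_preimS (ME M : finType) (q : ME -> M) (A : {set M}) :
  (forall f, exists e, q e = f) -> q @: (q @^-1: A) = A.
Proof.
move=> qs; apply/setP => x; apply/imsetP/idP.
  by case=> y; rewrite inE => Hy ->.
by move=> Hx; case: (qs x) => e He; exists e; rewrite ?inE He.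
Qed.

Lemma preim_injS (ME M : finType) (q : ME -> M) :
  (forall f, exists e, q e = f) -> injective (fun A : {set M} => q @^-1: A).
Proof.
move=> qs A B /= E.
by rewrite -(@imset_preimS _ _ q A qs) -(@imset_preimS _ _ q B qs) E.
Qed.

Lemma decompS (K : fieldType) (ME M : finType) (q : ME -> M) (S : {set {set M}})
  (c : {set ME} -> K) (e : ME) :
  (forall f, exists e, q e = f) ->
  (\sum_(tau in Stilde q S) [ffun x => c tau * sblock K tau x]) e =
  (\sum_(sig in S) [ffun g => c (q @^-1: sig) * sblock K sig g]) (q e).
Proof.
move=> qs; rewrite /Stilde big_imset /=; last by move=> A B _ _; apply: preim_injS.
rewrite !sum_ffunE; apply: eq_bigr => sig _.
by rewrite !ffunE inE.
Qed.

Lemma KmapS (K : fieldType) (ME M : finType) (q : ME -> M) (v : {ffun ME -> K})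
  (u : M -> K) (g : M) :
  (forall e, v e = u (q e)) ->
  Kmap q v g = (#|[pred e | q e == g]|)%:R * u g.
Proof.
move=> Hv; rewrite /Kmap ffunE.
rewrite (eq_bigr (fun _ => u g)); last by move=> e /eqP <-.
by rewrite sumr_const mulr_natl.
Qed.

Lemma Hinj (O M : finType) (src tgt : M -> O) (id : O -> M) (comp : M -> M -> M)
  (inv : M -> M) (K : fieldType) (H : O -> finLmodType K)
  (Hmap : forall x y : O, M -> H x -> H y)
  (Cgrp : is_groupoid_inv src tgt id comp inv)
  (Hid : forall x (u : H x), Hmap x x (id x) u = u)
  (Hcomp : forall f g, src f = tgt g -> forall u : H (src g),
     Hmap (src g) (tgt f) (comp f g) u = Hmap (tgt g) (tgt f) f (Hmap (src g) (tgt g) g u))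
  (f : M) : injective (Hmap (src f) (tgt f) f).
Proof.
case: (Cgrp f) => s1 t1 _ c2.
have := Hcomp (inv f) f s1; rewrite c2.
move: (Hmap (tgt f)) => G.
move: (tgt (inv f)) t1 G => y Ey G; subst y => HG.
move=> u1 u2 E.
by rewrite -(Hid _ u1) -(Hid _ u2) !HG E.
Qed.

Lemma Hcard (O M : finType) (src tgt : M -> O) (id : O -> M) (comp : M -> M -> M)
  (inv : M -> M) (K : fieldType) (H : O -> finLmodType K)
  (Hmap : forall x y : O, M -> H x -> H y)
  (Cgrp : is_groupoid_inv src tgt id comp inv)
  (Cconn : cat_connected src tgt)
  (Hid : forall x (u : H x), Hmap x x (id x) u = u)
  (Hcomp : forall f g, src f = tgt g -> forall u : H (src g),
     Hmap (src g) (tgt f) (comp f g) u = Hmap (tgt g) (tgt f) f (Hmap (src g) (tgt g) g u))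
  (x y : O) : #|H x| = #|H y|.
Proof.
have le f : (#|H (src f)| <= #|H (tgt f)|)%N.
  have := leq_card _ (@Hinj _ _ src tgt id comp inv K H Hmap Cgrp Hid Hcomp f). by [].
have eqf f : #|H (src f)| = #|H (tgt f)|.
  apply/eqP; rewrite eqn_leq le /=.
  by case: (Cgrp f) => s1 t1 _ _; have := le (inv f); rewrite s1 t1.
move: (Cconn x y) => /connectP [p Hp ->] {y}.
elim: p x Hp => [|z p IH] x //= /andP [/existsP [f Hf] Hp].
rewrite -(IH z Hp).
by case/orP: Hf => /andP [/eqP <- /eqP <-].
Qed.

Lemma fibcard (M ME O : finType) (K : fieldType) (H : O -> finLmodType K)
  (tgt : M -> O) (q : ME -> M) (act : forall x : O, H x -> ME -> ME)
  (actq : forall e (a : H (tgt (q e))), q (act (tgt (q e)) a e) = q e)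
  (actreg : forall e e', q e = q e' ->
            exists! a : H (tgt (q e)), act (tgt (q e)) a e = e')
  (g : M) (e0 : ME) : q e0 = g -> #|[pred e | q e == g]| = #|H (tgt g)|.
Proof.
move=> He0.
have inj : injective (fun a : H (tgt (q e0)) => act (tgt (q e0)) a e0).
  move=> a b E.
  case: (actreg e0 (act (tgt (q e0)) a e0) (esym (actq e0 a))) => a' [_ U].
  by rewrite -(U a) // -(U b).
have Eq : [pred e | q e == g] =i [set act (tgt (q e0)) a e0 | a in [set: H (tgt (q e0))]].
  move=> e; rewrite !inE; apply/eqP/imsetP.
    move=> Ee; case: (actreg e0 e (etrans He0 (esym Ee))) => a [Ha _].
    by exists a; rewrite ?inE.
  by case=> a _ ->; rewrite actq.
by rewrite (eq_card Eq) card_imset // cardsT He0.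
Qed.

Theorem corollary6p13
  (* the groupoid C *)
  (O M : finType) (src tgt : M -> O) (id : O -> M) (comp : M -> M -> M)
  (inv : M -> M) (S : {set {set M}}) (Tob : O -> O) (Tmor : M -> M)
  (* the field K and the functor H : C -> K-Mod, D_g = H (tgt g) *)
  (K : fieldType) (H : O -> finLmodType K)
  (Hmap : forall x y : O, M -> H x -> H y)
  (* the linear extension D_+ -> E -> C *)
  (ME : finType) (srcE tgtE : ME -> O) (idE : O -> ME) (compE : ME -> ME -> ME)
  (q : ME -> M) (act : forall x : O, H x -> ME -> ME)
  (* C is a connected groupoid, (C,S,T) a basic association schemoid, T f = f^-1 *)
  (Ccat : is_category src tgt id comp)
  (Cgrp : is_groupoid_inv src tgt id comp inv)
  (Cconn : cat_connected src tgt)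
  (Cas : is_association_schemoid src tgt id comp S Tob Tmor)
  (Cunital : is_unital id S)
  (Tinv : forall f, Tmor f = inv f)
  (Tobj : forall x, Tob x = x)
  (* H is a functor *)
  (Hlin : forall x y f (a : K) (u v : H x),
            Hmap x y f (a *: u + v) = a *: Hmap x y f u + Hmap x y f v)
  (Hid : forall x (u : H x), Hmap x x (id x) u = u)
  (Hcomp : forall f g, src f = tgt g -> forall u : H (src g),
     Hmap (src g) (tgt f) (comp f g) u = Hmap (tgt g) (tgt f) f (Hmap (src g) (tgt g) g u))
  (* E is a category, q a full functor which is the identity on objects *)
  (Ecat : is_category srcE tgtE idE compE)
  (qsrc : forall e, src (q e) = srcE e)
  (qtgt : forall e, tgt (q e) = tgtE e)
  (qid : forall x, q (idE x) = id x)
  (qcomp : forall e1 e2, srcE e1 = tgtE e2 -> q (compE e1 e2) = comp (q e1) (q e2))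
  (qfull : forall f, exists e, [/\ srcE e = src f, tgtE e = tgt f & q e = f])
  (* D_f = H (tgt f) acts on q^{-1}(f) transitively and freely *)
  (act0 : forall e, act (tgt (q e)) 0 e = e)
  (actD : forall e (a b : H (tgt (q e))),
            act (tgt (q e)) (a + b) e = act (tgt (q e)) a (act (tgt (q e)) b e))
  (actq : forall e (a : H (tgt (q e))), q (act (tgt (q e)) a e) = q e)
  (actreg : forall e e', q e = q e' ->
            exists! a : H (tgt (q e)), act (tgt (q e)) a e = e')
  (* (f0 + alpha)(g0 + beta) = f0 g0 + f_* beta + g^* alpha *)
  (actcomp : forall e1 e2, srcE e1 = tgtE e2 ->
     forall (alpha : H (tgt (q e1))) (beta : H (tgt (q e2))),
       compE (act (tgt (q e1)) alpha e1) (act (tgt (q e2)) beta e2)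
       = act (tgt (q e1)) (Hmap (tgt (q e2)) (tgt (q e1)) (q e1) beta + alpha)
             (compE e1 e2)) :
  (forall v : {ffun ME -> K}, in_schemoid_alg (Stilde q S) v -> in_schemoid_alg S (Kmap q v)) /\
  (((forall v w : {ffun ME -> K}, in_schemoid_alg (Stilde q S) v -> in_schemoid_alg (Stilde q S) w ->
                 Kmap q v = Kmap q w -> v = w) /\
    (forall u : {ffun M -> K}, in_schemoid_alg S u ->
               exists2 v, in_schemoid_alg (Stilde q S) v & Kmap q v = u))
   <-> (forall (g : M) (p : nat), p \in [pchar K] -> ~~ (p %| #|H (tgt g)|)%N)) /\
  ((exists (g : M) (p : nat), p \in [pchar K] /\ (p %| #|H (tgt g)|)%N) ->
     forall v : {ffun ME -> K}, in_schemoid_alg (Stilde q S) v -> Kmap q v = 0).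
Proof.
have qs : forall f, exists e, q e = f.
  by move=> f; case: (qfull f) => e [_ _ He]; exists e.
pose n := (match [pick x : O] with Some x => #|H x| | None => 0%N end).
have nE : forall g : M, #|H (tgt g)| = n.
  move=> g; rewrite /n; case: pickP => [x _|/(_ (tgt g))//].
  exact: (Hcard O M src tgt id comp inv K H Hmap Cgrp Cconn Hid Hcomp).
have dec := fun c e => decompS K ME M q S c e qs.
have key : forall (c : {set ME} -> K) (g : M),
  Kmap q (\sum_(tau in Stilde q S) [ffun x => c tau * sblock K tau x]) g =
  n%:R * (\sum_(sig in S) [ffun g => c (q @^-1: sig) * sblock K sig g]) g.
  move=> c g; case: (qs g) => e0 He0.
  rewrite (KmapS K ME M q _ (fun g => (\sum_(sig in S) [ffun g => c (q @^-1: sig) * sblock K sig g]) g) g (dec c)).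
  by rewrite (fibcard M ME O K H tgt q act actq actreg g e0 He0) nE.
split.
  move=> v [c ->]; exists (fun sig : {set M} => n%:R * c (q @^-1: sig)).
  apply/ffunP => g; rewrite key !sum_ffunE mulr_sumr; apply: eq_bigr => sig _.
  by rewrite !ffunE mulrA.
split; last first.
  move=> [g [p [Hp Hd]]] v [c ->]; apply/ffunP => g'.
  have n0 : n%:R = 0 :> K by apply/eqP; rewrite -(nE g) -(dvdn_pcharf Hp).
  by rewrite key n0 mul0r ffunE.
split.
  move=> [Hinj' Hsurj] g p Hp; apply/negP => Hd.
  have n0 : n%:R = 0 :> K by apply/eqP; rewrite -(nE g) -(dvdn_pcharf Hp).
  have [sig Ssig gsig] : exists2 sig, sig \in S & g \in sig.
    case: Cas => [[Hpart _] _ _ _ _]; move: Hpart => /and3P [/eqP Hcov _ _].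
    have : g \in cover S by rewrite Hcov inE.
    by move/bigcupP => [sig ? ?]; exists sig.
  have Hin : in_schemoid_alg S (sblock K sig).
    exists (fun tau : {set M} => (tau == sig)%:R); apply/ffunP => f.
    rewrite sum_ffunE (bigD1 sig) //= !ffunE eqxx mul1r big1 ?addr0 //.
    by move=> tau /andP [_ /negbTE]; rewrite ffunE => ->; rewrite mul0r.
  have [v [c Ev] Hv] := Hsurj (sblock K sig) Hin.
  move: Hv; rewrite Ev => /ffunP /(_ g); rewrite key n0 mul0r /sblock ffunE gsig.
  by move/eqP; rewrite eq_sym oner_eq0.
move=> Hch.
have n0 : forall g : M, n%:R != 0 :> K.
  move=> g; apply/negP => Hn.
  have npos : (0 < n)%N by rewrite -(nE g); apply/card_gt0P; exists 0.
  have [p Hp] := natf0_pchar npos Hn.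
  by have := Hch g p Hp; rewrite nE (dvdn_pcharf Hp) Hn.
split.
  move=> v w [cv ->] [cw ->] E; apply/ffunP => e.
  rewrite !dec; apply: (mulfI (n0 (q e))).
  by rewrite -!key E.
move=> u [c ->].
exists (\sum_(tau in Stilde q S) [ffun e => (n%:R^-1 * c (q @: tau)) * sblock K tau e]).
  by exists (fun tau : {set ME} => n%:R^-1 * c (q @: tau)).
apply/ffunP => g; rewrite key !sum_ffunE mulr_sumr; apply: eq_bigr => sig _.
rewrite !ffunE imset_preimS // !mulrA mulfV ?mul1r //; exact: n0 g.
Qed.
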